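(* Let $n\ge1$, $\mathbf{k}=(k_1,\dots,k_n)$ positive integers, $N=n+|\mathbf{k}|$, and $D\in\mathcal{D}_{\mathbf{k}}$ with rank tableau $R(D)$. If the indices $1,2,\dots,N$ of $T(D)$ are assigned ranks $r_1,r_2,\dots,r_N$ by the Ranking Algorithm, then $0=r_1\le r_2\le\cdots\le r_N$, and more precisely $r_i-r_{i-1}\in\{0,1\}$ for each $2\le i\le N$.
   Context: $|\mathbf{k}|=k_1+\cdots+k_n$. $\mathcal{D}_{\mathbf{k}}$: sequences $(a_1,\dots,a_N)$ whose positive entries are $k_1,\dots,k_n$ in order, other entries $-1$, all partial sums $a_1+\cdots+a_{i-1}\ge0$. SW-word: $S^{k_j}$ for up step $k_j$, $W$ for $-1$. Filling Algorithm producing $T(D)$: $n$ columns, column $i$ with $k_i+1$ cells in rows $1,\dots,k_i+1$; place $1$ at top of column 1; having placed $1,\dots,i-1$, the lowest filled entry of column $j$ is active if not in row $k_j+1$; if the $i$-th letter of $\texttt{SW}(D)$ is $W$ place $i$ below the smallest active entry, otherwise at the top of the leftmost empty column; continue until $1,\dots,N$ are placed. Entries of $T(D)$ are called indices. Ranking Algorithm (producing $R(D)$, same shape, each box containing the rank of the corresponding index): ranks $0,1,\dots,k_1$ to the column-1 indices top to bottom; for $i=2,\dots,n$, if the top index of column $i$ is $A+1$ and index $A$ has rank $a$, column $i$ indices get ranks $a,a+1,\dots,a+k_i$ top to bottom. *)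

(* Defs.v *)
From mathcomp Require Import all_boot all_order all_algebra.
Set Implicit Arguments. Unset Strict Implicit. Unset Printing Implicit Defensive.
Import Order.TTheory GRing.Theory Num.Theory.

(* k = (k_1,...,k_n) as a seq nat (0-based: k_j is nth 0 k (j-1)).
   D = (a_1,...,a_N) as a seq int.  Columns of T(D) are indexed 0..n-1
   internally (column j+1 of the paper is entry j). *)

Local Open Scope ring_scope.

Definition in_Dk (k : seq nat) (D : seq int) : Prop :=
  [/\ size D = (size k + sumn k)%N,
      [seq x <- D | 0 < x] = [seq (x%:Z) | x <- k],
      all (fun x : int => (0 < x) || (x == -1)) D
    & forall i : nat, (1 <= i <= size D)%N -> 0 <= \sum_(x <- take i.-1 D) x].

Local Close Scope ring_scope.

Inductive letter := S | W.
Definition SW (D : seq int) : seq letter :=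
  [seq (if (x < 0)%R then W else S) | x <- D].

(* A partial filling: for each column, its entries listed top to bottom. *)
Definition col (cols : seq (seq nat)) (j : nat) : seq nat := nth [::] cols j.

Definition active (k : seq nat) (cols : seq (seq nat)) (j : nat) : bool :=
  (0 < size (col cols j)) && (size (col cols j) < (nth 0 k j).+1).

Definition lowest (cols : seq (seq nat)) (j : nat) : nat := last 0 (col cols j).

Fixpoint argmin_col (f : nat -> nat) (s : seq nat) : option nat :=
  match s with
  | [::] => None
  | j :: s' =>
      match argmin_col f s' with
      | None => Some j
      | Some j' => if f j <= f j' then Some j else Some j'
      end
  end.

Definition fill_step (k : seq nat) (cols : seq (seq nat)) (il : nat * letter)
  : seq (seq nat) :=
  let (i, l) := il in
  match l with
  | W =>
      match argmin_col (lowest cols) [seq j <- iota 0 (size k) | active k cols j] with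
      | Some j => set_nth [::] cols j (rcons (col cols j) i)
      | None => cols
      end
  | S =>
      let c := find (fun s : seq nat => nilp s) cols in
      if c < size cols then set_nth [::] cols c [:: i] else cols
  end.

(* The Filling Algorithm: T(D), as the list of its n columns (top to bottom).
   Index 1 is placed at the top of column 1 (the first letter is S). *)
Definition fillT (k : seq nat) (D : seq int) : seq (seq nat) :=
  foldl (fill_step k) (nseq (size k) [::]) (zip (iota 1 (size D)) (SW D)).

(* The Ranking Algorithm: rank of each index. Column 1 gets ranks 0..k_1;
   column i >= 2 with top index A+1 gets ranks a, a+1, ... where a = rank(A). *)
Definition rank_step (T : seq (seq nat)) (rk : nat -> nat) (c : nat) : nat -> nat :=
  let cl := col T c in
  let base := if c == 0 then 0 else rk (head 0 cl).-1 in
  fun t => if t \in cl then base + index t cl else rk t.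

Definition rank_of (T : seq (seq nat)) : nat -> nat :=
  foldl (rank_step T) (fun _ => 0) (iota 0 (size T)).

Definition rankT (k : seq nat) (D : seq int) : seq (seq nat) :=
  let T := fillT k D in [seq [seq rank_of T t | t <- cl] | cl <- T].

Definition r_ (k : seq nat) (D : seq int) (i : nat) : nat := rank_of (fillT k D) i.

(* Main.v *)
Require Import Defs.
From mathcomp Require Import all_boot all_order all_algebra.
From mathcomp Require Import zify.
Import Defs.
Set Implicit Arguments. Unset Strict Implicit. Unset Printing Implicit Defensive.
Import Order.TTheory GRing.Theory Num.Theory.

Definition stp (D : seq int) := zip (iota 1 (size D)) (SW D).
Definition state k D m := foldl (fill_step k) (nseq (size k) [::]) (take m (stp D)).
Definition ltr (x : int) := if (x < 0)%R then W else S.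
Definition add (cols : seq (seq nat)) j x := set_nth [::] cols j (rcons (col cols j) x).

Lemma size_stp D : size (stp D) = size D.
Proof. by rewrite /stp size_zip size_iota size_map minnn. Qed.

Lemma state_succ k D m : m < size D ->
  state k D m.+1 = fill_step k (state k D m) (m.+1, ltr (nth 0%R D m)).
Proof.
move=> hm; rewrite /state (take_nth (0, S)) ?size_stp // foldl_rcons.
rewrite /stp nth_zip ?size_iota ?size_map // nth_iota // (nth_map 0%R) //.

Qed.

Lemma fillT_state k D : fillT k D = state k D (size D).
Proof. by rewrite /state take_oversize // size_stp. Qed.

Lemma col_add cols j x c : col (add cols j x) c =
  if c == j then rcons (col cols j) x else col cols c.
Proof. by rewrite /add /col nth_set_nth /=. Qed.

Lemma size_add cols j x : j < size cols -> size (add cols j x) = size cols.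
Proof. move=> h; rewrite /add size_set_nth; lia. Qed.

Lemma argmin_spec f s : match argmin_col f s with
  | None => s = [::]
  | Some j => j \in s /\ forall j', j' \in s -> f j <= f j' end.
Proof.
elim: s => [|a s IH] //=.
case: (argmin_col f s) IH => [j' [h1 h2]|->].
  case: ifP => hle; split.
  - by rewrite inE eqxx.
  - move=> x; rewrite inE => /orP[/eqP->//|/h2]; exact: leq_trans.
  - by rewrite inE h1 orbT.
  - move=> x; rewrite inE => /orP[/eqP->|/h2//]; lia.
by split=> [|x]; rewrite !inE // => /eqP->.
Qed.

Lemma fill_step_ext k cols il c : exists t, col (fill_step k cols il) c = col cols c ++ t.
Proof.
case: il => i [] /=.
  case: ifP => hc; last by exists [::]; rewrite cats0.
  rewrite /col nth_set_nth /=; case: eqP => [->|]; last by exists [::]; rewrite cats0.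
  have := nth_find [::] (s := cols) (a := fun s => nilp s).
  rewrite has_find hc => /(_ isT); rewrite /nilp => /nilP->; by exists [:: i].
case: argmin_col => [j|]; last by exists [::]; rewrite cats0.
rewrite /col nth_set_nth /=; case: eqP => [->|]; last by exists [::]; rewrite cats0.
by exists [:: i]; rewrite cats1.
Qed.
Definition pos (x : int) := (0 < x)%R.

Lemma sum_pm (l : seq int) : all (fun x => (0 < x)%R || (x == -1)%R) l ->
  (\sum_(x <- l) x)%R = ((sumn [seq absz x | x <- l & pos x])%:Z - (count (predC pos) l)%:Z)%R.
Proof.
elim: l => [|a l IH]; first by rewrite big_nil.
rewrite /= big_cons => /andP[ha /IH->]; rewrite /pos.
case: (ltrP 0 a) ha => /= ha.
  by rewrite -[in LHS](gtz0_abs ha) => _; lia.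
move=> /eqP->; lia.
Qed.

Lemma Dk_tot k D : in_Dk k D -> (\sum_(x <- D) x = 0)%R.
Proof.
case=> hs hf ha _; rewrite sum_pm // -/pos.
have -> : [seq x <- D | pos x] = [seq Posz x | x <- k] by [].
rewrite -map_comp /= map_id.
have := count_predC pos D; rewrite -size_filter.
have -> : [seq x <- D | pos x] = [seq Posz x | x <- k] by [].
rewrite size_map hs; lia.
Qed.

Lemma Dk_pos k D m : in_Dk k D -> m < size D -> (0 <= \sum_(x <- take m.+1 D) x)%R.
Proof.
move=> hD hm; case: (ltnP m.+1 (size D)) => h.
  by case: hD => _ _ _ /(_ m.+2) /=; apply; lia.
by rewrite take_oversize // (Dk_tot hD).
Qed.

Definition sl (k : seq nat) (sq : seq nat) c :=
  if 0 < size sq then (nth 0 k c).+1 - size sq else 0.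
Definition slots k cols := \sum_(c < size k) sl k (col cols c) c.

Lemma slots_add k cols j x : j < size k ->
  slots k (add cols j x) + sl k (col cols j) j = slots k cols + sl k (rcons (col cols j) x) j.
Proof.
move=> hj; rewrite /slots (bigD1 (Ordinal hj)) //= [in RHS](bigD1 (Ordinal hj)) //= col_add eqxx.
rewrite (eq_bigr (fun c : 'I_(size k) => sl k (col cols c) c)); first lia.
move=> c hc; rewrite col_add; case: eqP => // e.
by move: hc; rewrite -val_eqE /= e eqxx.
Qed.

Record Pinv (k : seq nat) (D : seq int) (m : nat) (cols : seq (seq nat)) : Prop := {
 p_size : size cols = size k;
 p_ne : forall c, (0 < size (col cols c)) = (c < count pos (take m D));
 p_rng : forall c t, t \in col cols c -> 0 < t <= m;
 p_all : forall t, 0 < t <= m -> exists c, t \in col cols c;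
 p_disj : forall c c' t, t \in col cols c -> t \in col cols c' -> c = c';
 p_uniq : forall c, uniq (col cols c);
 p_slots : Posz (slots k cols) = (\sum_(x <- take m D) x)%R;
 p_head : forall c, 0 < c -> 0 < size (col cols c) ->
    exists2 c', c' < c & (head 0 (col cols c)).-1 \in col cols c' }.

Lemma Pinv0 k D : Pinv k D 0 (nseq (size k) [::]).
Proof.
have hc c : col (nseq (size k) [::]) c = [::] by rewrite /col nth_nseq if_same.
split=> //; rewrite ?size_nseq //.
- by move=> c; rewrite hc take0.
- by move=> c t; rewrite hc.
- lia.
- by move=> c c' t; rewrite hc.
- by move=> c; rewrite hc.
- by rewrite take0 big_nil /slots big1 // => c _; rewrite hc.
- by move=> c _; rewrite hc.
Qed.

Lemma Pinv_add k D m cols j : Pinv k D m cols -> j < size k ->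
  (col cols j = [::] -> 0 < j -> 0 < m) ->
  (forall c, (0 < size (col (add cols j m.+1) c)) = (c < count pos (take m.+1 D))) ->
  Posz (slots k (add cols j m.+1)) = (\sum_(x <- take m.+1 D) x)%R ->
  Pinv k D m.+1 (add cols j m.+1).
Proof.
move=> P hj hm hne hsl.
have hsz : j < size cols by rewrite (p_size P).
have fresh c : m.+1 \notin col cols c by apply/negP => /(p_rng P); lia.
split=> //.
- by rewrite size_add // (p_size P).
- move=> c t; rewrite col_add; case: eqP => _; last by move/(p_rng P); lia.
  by rewrite mem_rcons inE => /orP[/eqP->|/(p_rng P)]; lia.
- move=> t ht; case: (ltnP m t) => h.
    by exists j; rewrite col_add eqxx mem_rcons inE; apply/orP; left; apply/eqP; lia.
  have [c hc] : exists c, t \in col cols c by apply: (p_all P); lia.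
  by exists c; rewrite col_add; case: eqP => [e|//]; rewrite mem_rcons inE -e hc orbT.
- move=> c c' t; rewrite !col_add.
  case: eqP => [->|hcj]; case: eqP => [->|hcj'] //.
  + rewrite mem_rcons inE => /orP[/eqP->|h1] h2; first by move: (fresh c'); rewrite h2.
    by have := p_disj P h1 h2.
  + move=> h1; rewrite mem_rcons inE => /orP[/eqP ht|h2]; first by move: (fresh c); rewrite -ht h1.
    by have := p_disj P h1 h2.
  + by move=> h1 h2; have := p_disj P h1 h2.
- move=> c; rewrite col_add; case: eqP => _.
    by rewrite rcons_uniq fresh (p_uniq P).
  by have := p_uniq P c.
- move=> c hc0; rewrite !col_add; case: eqP => [e|hcj] hsc.
    subst c.
    case E: (col cols j) => [|y s].
      have hm0 := hm E hc0.
      have [c' hc'] : exists c', m \in col cols c' by apply: (p_all P); lia.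
      exists c'; last by rewrite col_add (negbTE (_ : c' != j)) //; apply/eqP => e; move: hc'; rewrite e E.
      have := p_ne P c'; have := p_ne P j; rewrite E /=.
      have : 0 < size (col cols c') by case: (col cols c') hc'.
      move=> -> h1 h2; move: h1 h2; rewrite ltnn; case: ltnP => // h1 _ h2; symmetry in h2; lia.
    have [c' hc' hin] := p_head P hc0 (ltac:(by rewrite E) : 0 < size (col cols j)).
    exists c' => //; rewrite E /= in hin.
    by rewrite col_add (negbTE (_ : c' != j)) //; apply/eqP; lia.
  have [c' hc' hin] := p_head P hc0 hsc.
  exists c' => //; rewrite col_add; case: eqP => [e|_]; last exact: hin. by rewrite mem_rcons inE -e hin orbT.
Qed.

Lemma find_eq T (a : pred T) (l : seq T) x0 s : s < size l -> a (nth x0 l s) ->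
  (forall c, c < s -> ~~ a (nth x0 l c)) -> find a l = s.
Proof.
elim: l s => [|y l IH] [|s] //=.
  by move=> _ ->.
move=> hs ha hb; have := hb 0 isT; rewrite /= => /negbTE->.
congr (_.+1); apply: IH => // c hc; exact: (hb c.+1).
Qed.


Lemma Dk_mem k D x : in_Dk k D -> x \in D -> (0 < x)%R || (x == -1)%R.
Proof. by case=> _ _ /allP h _; apply: h. Qed.

Lemma take_succ (D : seq int) m : m < size D -> take m.+1 D = take m D ++ [:: nth 0%R D m].
Proof. by move=> h; rewrite (take_nth 0%R) // cats1. Qed.

Lemma stepS k D m cols : in_Dk k D -> Pinv k D m cols -> m < size D ->
  ~~ (nth 0%R D m < 0)%R ->
  let s := count pos (take m D) in
  [/\ s < size k, nth 0%R D m = Posz (nth 0 k s), col cols s = [::]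
    & fill_step k cols (m.+1, S) = add cols s m.+1].
Proof.
move=> hD P hm ha s.
have hpos : pos (nth 0%R D m).
  by have := Dk_mem hD (mem_nth 0%R hm); rewrite /pos; case/orP => [//|/eqP e]; move: ha; rewrite e.
have hf : [seq x <- D | pos x] = [seq Posz x | x <- k] by case: hD.
have e : [seq x <- D | pos x] = [seq x <- take m D | pos x] ++ nth 0%R D m :: [seq x <- drop m.+1 D | pos x].
  by rewrite -{1}(cat_take_drop m D) filter_cat (drop_nth 0%R) //= hpos.
have hs : s < size k.
  by rewrite -(size_map Posz) -hf e size_cat /= size_filter -/s addnS ltnS leq_addr.
have hnil : col cols s = [::].
  by apply: size0nil; have := p_ne P s; rewrite -/s ltnn; case: (size _).
split=> //.
  by rewrite -(nth_map 0 0%R) // -hf e nth_cat size_filter ltnn subnn.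
rewrite /= (@find_eq _ _ _ [::] s).
- by rewrite (p_size P) hs /add hnil.
- by rewrite (p_size P).
- by rewrite -/(col cols s) hnil.
- move=> c hc; rewrite -/(col cols c) /nilp -lt0n (p_ne P); exact: hc.
Qed.

Lemma stepW k D m cols : in_Dk k D -> Pinv k D m cols -> m < size D ->
  (nth 0%R D m < 0)%R ->
  exists j, [/\ active k cols j,
    (forall j', active k cols j' -> lowest cols j <= lowest cols j'), j < size k
    & fill_step k cols (m.+1, W) = add cols j m.+1].
Proof.
move=> hD P hm ha.
have ea : nth 0%R D m = (-1)%R.
  by have := Dk_mem hD (mem_nth 0%R hm); case/orP => [h|/eqP//]; move: ha; rewrite ltNge ltW.
have h1 := Dk_pos hD hm; rewrite take_succ // big_cat big_seq1 /= ea in h1.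
have hsl : 0 < slots k cols.
  by have := p_slots P; move=> e; move: h1; rewrite -e; lia.
have hhas : has (active k cols) (iota 0 (size k)).
  apply/negPn/negP => /hasPn hn; move: hsl; rewrite /slots big1 // => c _.
  have := hn c; rewrite mem_iota /= ltn_ord => /(_ isT); rewrite /active /sl.
  by case: ifP => //= _; rewrite -leqNgt -subn_eq0 => /eqP.
have := argmin_spec (lowest cols) [seq j <- iota 0 (size k) | active k cols j].
rewrite /=; case: (argmin_col _ _) => [j [hj hmin]|hnil]; last first.
  by move: hhas; rewrite has_filter hnil.
move: hj; rewrite mem_filter mem_iota /= => /andP[hact hjk].
exists j; split=> //.
move=> j' ha'; apply: hmin; rewrite mem_filter ha' mem_iota /=.
move: ha'; rewrite /active /col => /andP[h0 _]; rewrite -(p_size P).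
by apply: contraLR h0 => h; rewrite -leqNgt in h; rewrite nth_default.
Qed.

Lemma Pinv_step k D m cols : in_Dk k D -> Pinv k D m cols -> m < size D ->
  Pinv k D m.+1 (fill_step k cols (m.+1, ltr (nth 0%R D m))).
Proof.
move=> hD P hm; rewrite /ltr; case: ifP => ha.
  have [j [hact hmin hj ->]] := stepW hD P hm ha.
  have ea : nth 0%R D m = (-1)%R.
    by have := Dk_mem hD (mem_nth 0%R hm); case/orP => [h|/eqP//]; move: ha; rewrite ltNge ltW.
  have hc : count pos (take m.+1 D) = count pos (take m D).
    by rewrite take_succ // count_cat /= ea /pos; lia.
  move: (hact); rewrite /active => /andP[hj0 hjk].
  apply: Pinv_add => //.
  - by move=> E; move: hj0; rewrite E.
  - move=> c; rewrite col_add hc; case: eqP => [->|_]; last exact: p_ne P c.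
    by rewrite size_rcons -(p_ne P) hj0.
  - have := slots_add cols m.+1 hj; rewrite /sl size_rcons hj0 /=.
    rewrite take_succ // big_cat big_seq1 /= ea -(p_slots P); lia.
have [hs ea hnil ->] := stepS hD P hm (negbT ha).
set s := count pos (take m D) in hs ea hnil *.
have hp : pos (nth 0%R D m).
  by have := Dk_mem hD (mem_nth 0%R hm); rewrite /pos; case/orP => [//|/eqP e]; move: ha; rewrite e.
have hc : count pos (take m.+1 D) = s.+1.
  by rewrite take_succ // count_cat /= hp addn0 addn1.
apply: Pinv_add => //.
- move=> _ hs0; have := p_ne P 0; rewrite -/s hs0.
  case E: (col cols 0) => [|t l] //= _.
  have : t \in col cols 0 by rewrite E inE eqxx.
  move/(p_rng P); lia.
- move=> c; rewrite col_add hc; case: eqP => [->|hcs]; first by rewrite size_rcons ltnSn.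
  rewrite (p_ne P) -/s; lia.
- have := slots_add cols m.+1 hs; rewrite /sl hnil /=.
  rewrite take_succ // big_cat big_seq1 /= ea -(p_slots P); lia.
Qed.

Lemma Pinv_state k D m : in_Dk k D -> m <= size D -> Pinv k D m (state k D m).
Proof.
move=> hD; elim: m => [|m IH] hm; first by rewrite /state take0; exact: Pinv0.
rewrite state_succ //; apply: Pinv_step => //; exact: IH (ltnW hm).
Qed.

Lemma state_ext k D m m' : m <= m' -> forall c, exists t,
  col (state k D m') c = col (state k D m) c ++ t.
Proof.
elim: m' => [|m' IH] hm c.
  have -> : m = 0 by lia.
  by exists [::]; rewrite cats0.
case: (ltnP m'.+1 m) hm => [|h1] hm; first lia.
case: (eqVneq m m'.+1) => [->|hne]; first by exists [::]; rewrite cats0.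
have [t1 e1] : exists t, col (state k D m') c = col (state k D m) c ++ t.
  by apply: IH; lia.
case: (ltnP m' (size D)) => hs.
  rewrite state_succ //; have [t2 ->] := fill_step_ext k (state k D m') (m'.+1, ltr (nth 0%R D m')) c.
  by rewrite e1 -catA; eexists.
have -> : state k D m'.+1 = state k D m' by rewrite /state !take_oversize ?size_stp //; lia.
by exists t1.
Qed.

Lemma keep T s rk t : (forall c, c \in s -> t \notin col T c) ->
  foldl (rank_step T) rk s t = rk t.
Proof.
elim: s rk => //= c s IH rk h; rewrite IH; last by move=> c' hc'; apply: h; rewrite inE hc' orbT.
by rewrite /rank_step (negbTE (h c _)) // inE eqxx.
Qed.

Lemma rank_char T c p :
  (forall c c' t, t \in col T c -> t \in col T c' -> c = c') ->
  (forall c, uniq (col T c)) ->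
  (forall c, 0 < c -> 0 < size (col T c) ->
     exists2 c', c' < c & (head 0 (col T c)).-1 \in col T c') ->
  c < size T -> p < size (col T c) ->
  rank_of T (nth 0 (col T c) p) =
    (if c == 0 then 0 else rank_of T ((head 0 (col T c)).-1)) + p.
Proof.
move=> hdisj huniq hhead hc hp.
set F := foldl (rank_step T) (fun _ => 0) (iota 0 c).
have hsplit : rank_of T =
    foldl (rank_step T) (rank_step T F c) (iota c.+1 (size T - c.+1)).
  rewrite /rank_of {1}(_ : size T = c + (size T - c.+1).+1); last lia.
  by rewrite iotaD foldl_cat add0n /=.
have hF u c' : c' < c -> u \in col T c' -> rank_of T u = F u.
  move=> hc' hu; rewrite hsplit keep; last first.
    move=> c2; rewrite mem_iota => /andP[h2 _]; apply/negP => /(hdisj _ _ _ hu); lia.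
  rewrite /rank_step; case: ifP => // hu'; have := hdisj _ _ _ hu hu'; lia.
have ht : nth 0 (col T c) p \in col T c by exact: mem_nth.
rewrite {1}hsplit keep; last first.
  move=> c2; rewrite mem_iota => /andP[h2 _]; apply/negP => /(hdisj _ _ _ ht); lia.
rewrite /rank_step ht index_uniq //; congr (_ + _).
case: eqP => // /eqP hc0.
have [c' hc' hin] : exists2 c', c' < c & (head 0 (col T c)).-1 \in col T c'.
  by apply: hhead; lia.
by rewrite (hF _ c').
Qed.

Record Qinv (R : nat -> nat) k m cols : Prop := {
 q1 : forall j, active k cols j -> R (lowest cols j) <= R m <= (R (lowest cols j)).+1;
 q2 : forall j j', active k cols j -> active k cols j' -> lowest cols j <= lowest cols j' ->
        R (lowest cols j) <= R (lowest cols j');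
 q3 : 0 < m -> R 1 = 0;
 q4 : forall i, 1 < i <= m -> R i = R i.-1 \/ R i = (R i.-1).+1 }.

Lemma active_add k cols j x j' : active k (add cols j x) j' =
  if j' == j then size (col cols j) < nth 0 k j else active k cols j'.
Proof. by rewrite /active col_add; case: eqP => [->|] //; rewrite size_rcons. Qed.

Lemma lowest_add cols j x j' : lowest (add cols j x) j' =
  if j' == j then x else lowest cols j'.
Proof. by rewrite /lowest col_add; case: eqP => // _; rewrite last_rcons. Qed.

Lemma lowest_in cols j : 0 < size (col cols j) -> lowest cols j \in col cols j.
Proof. by rewrite /lowest; case: (col cols j) => //= a s _; exact: mem_last. Qed.

Lemma lowest_nth cols j : lowest cols j = nth 0 (col cols j) (size (col cols j)).-1.
Proof. by rewrite /lowest nth_last. Qed.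

Lemma Q_state k D R m : in_Dk k D ->
  (forall c p, c < size k -> p < size (col (state k D (size D)) c) ->
     R (nth 0 (col (state k D (size D)) c) p) =
     (if c == 0 then 0 else R ((head 0 (col (state k D (size D)) c)).-1)) + p) ->
  m <= size D -> Qinv R k m (state k D m).
Proof.
move=> hD hR; elim: m => [|m IH] hm.
  have P := Pinv_state hD (leq0n (size D)).
  have hna j : ~~ active k (state k D 0) j by rewrite /active (p_ne P) take0.
  split=> //; last lia.
    by move=> j; rewrite (negbTE (hna j)).
  by move=> j j'; rewrite (negbTE (hna j)).
have P := Pinv_state hD (ltnW hm).
have Q := IH (ltnW hm).
set T := state k D (size D) in hR.
have hext c : exists t, col T c = col (state k D m.+1) c ++ t by apply: state_ext.
move: hext; rewrite state_succ //.
set cols := state k D m in P Q *.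
have hlow j : active k cols j -> 0 < lowest cols j <= m.
  by move=> /andP[h0 _]; apply: (p_rng P); exact: lowest_in.
rewrite /ltr; case: ifP => ha hext.
  have [j [hact hmin hj hfill]] := stepW hD P hm ha.
  rewrite hfill in hext *.
  move: (hact); rewrite /active => /andP[hj0 hjk].
  set e := lowest cols j.
  have [t ht] := hext j; rewrite col_add eqxx -cats1 -catA /= in ht.
  have n1 : nth 0 (col T j) (size (col cols j)).-1 = e.
    by rewrite ht nth_cat ifT; [rewrite /e lowest_nth | lia].
  have n2 : nth 0 (col T j) (size (col cols j)) = m.+1 by rewrite ht nth_cat ltnn subnn.
  have hsz : size (col cols j) < size (col T j) by rewrite ht size_cat /=; lia.
  have r1 := hR j _ hj hsz.
  have r2 := hR j (size (col cols j)).-1 hj (ltac:(lia)).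
  rewrite n2 in r1; rewrite n1 in r2.
  have hRi : R m.+1 = (R e).+1 by lia.
  have qj := q1 Q hact; rewrite -/e in qj.
  have hle : 0 < e <= m by apply: hlow.
  split.
  - move=> j'; rewrite active_add lowest_add; case: eqP => [_ _|hj' ha']; first lia.
    have := q1 Q ha'; have := q2 Q hact ha' (hmin _ ha'); rewrite -/e; lia.
  - move=> j1 j2; rewrite !active_add !lowest_add.
    case: eqP => [_|h1]; case: eqP => [_|h2] //.
    + by move=> _ ha2; have := hlow _ ha2; lia.
    + by move=> ha1 _ _; have := q1 Q ha1; lia.
    + by move=> a b c; have := q2 Q a b c.
  - by move=> _; have := hlow _ hact; have := q3 Q; lia.
  - move=> i hi; case: (ltnP m i) => hmi; last by have := q4 Q (i := i); lia.
    have -> : i = m.+1 by lia.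
    by rewrite /= hRi; lia.
have [hs ea hnil hfill] := stepS hD P hm (negbT ha).
move: hs ea hnil hfill; set s := count pos (take m D) => hs ea hnil hfill.
rewrite hfill in hext *.
have [t ht] := hext s; rewrite col_add eqxx hnil /= in ht.
have hRi : R m.+1 = (if s == 0 then 0 else R m) + 0.
  by have := hR s 0 hs; rewrite ht /= => ->.
rewrite addn0 in hRi.
have hms : (0 < m) = (0 < s).
  apply/idP/idP => h.
    have [c hc] : exists c, m \in col cols c by apply: (p_all P); lia.
    have : 0 < size (col cols c) by case: (col cols c) hc.
    rewrite (p_ne P) -/s; lia.
  have := p_ne P 0; rewrite -/s h; case E: (col cols 0) => [|y l] //= _.
  have : y \in col cols 0 by rewrite E inE eqxx.
  move/(p_rng P); lia.
have hR0 : 0 < m -> R m.+1 = R m by move=> h; rewrite hRi; move: h; rewrite hms; case: eqP => //->.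
split.
- move=> j'; rewrite active_add lowest_add; case: eqP => [_ _|hj' ha']; first lia.
  have := hlow _ ha' => hl; rewrite hR0; last lia.
  by have := q1 Q ha'.
- move=> j1 j2; rewrite !active_add !lowest_add.
  case: eqP => [_|h1]; case: eqP => [_|h2] //.
  + by move=> _ ha2; have := hlow _ ha2; lia.
  + move=> ha1 _ _; have := hlow _ ha1 => hl; rewrite hR0; last lia.
    by have := q1 Q ha1; lia.
  + by move=> a b c; have := q2 Q a b c.
- move=> _; case: (posnP m) => h0; last by have q := q3 Q; exact: q h0.
  have s0 : s = 0 by move: hms; rewrite h0; case: (s).
  by move: hRi; rewrite h0 s0.
- move=> i hi; case: (ltnP m i) => hmi; last by have := q4 Q (i := i); lia.
  have -> : i = m.+1 by lia.
  by left; rewrite /= hR0 //; lia.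
Qed.

Theorem mainTheorem6 (n : nat) (k : seq nat) (D : seq int) :
  (1 <= n)%N -> size k = n -> all (fun x => 0 < x)%N k -> in_Dk k D ->
  let N := (n + sumn k)%N in
  r_ k D 1 = 0%N /\
  (forall i : nat, (2 <= i <= N)%N -> (r_ k D i.-1 <= r_ k D i)%N) /\
  (forall i : nat, (2 <= i <= N)%N ->
     r_ k D i = r_ k D i.-1 \/ r_ k D i = (r_ k D i.-1).+1).
Proof.
move=> hn hk _ hD N.
have hsD : size D = N by case: hD => -> *; rewrite /N hk.
have PN := Pinv_state hD (leqnn (size D)).
have hR : forall c p, c < size k -> p < size (col (state k D (size D)) c) ->
    rank_of (state k D (size D)) (nth 0 (col (state k D (size D)) c) p) =
    (if c == 0 then 0 else rank_of (state k D (size D))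
        ((head 0 (col (state k D (size D)) c)).-1)) + p.
  move=> c p hc hp; apply: rank_char => //.
  - by move=> c1 c2 t h1 h2; have := p_disj PN h1 h2.
  - by move=> c1; have := p_uniq PN c1.
  - by move=> c1 h1 h2; have := p_head PN h1 h2.
  - by rewrite (p_size PN).
have Q := Q_state hD hR (leqnn (size D)).
have hr : r_ k D = rank_of (state k D (size D)) by rewrite /r_ fillT_state.
rewrite hr.
have h4 : forall i, 1 < i <= N -> rank_of (state k D (size D)) i =
   rank_of (state k D (size D)) i.-1 \/ rank_of (state k D (size D)) i =
   (rank_of (state k D (size D)) i.-1).+1.
  by move=> i hi; have := q4 Q (i := i); rewrite hsD; move/(_ hi).
split; first by have q := q3 Q; apply: q; lia.
split=> // i hi; have := h4 i hi; lia.
Qed.
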